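(* Let $1\le i<s\le t$ and let $\mathcal H$ be an $s$-graph on $n$ vertices with $\Delta_i(\mathcal H)\le\Delta$. (a) If $\Delta$ is a nonnegative integer with $(s-i)$-cascade representation $\Delta=\sum_{k=0}^{\ell-1}\binom{n_{s-i-k}}{s-i-k}$, then \[k^t(\mathcal H)\le\binom{n}{i}\frac{1}{\binom{t}{i}}\sum_{k=0}^{\ell-1}\binom{n_{s-i-k}}{t-i-k}.\] (b) If $\Delta=\binom{x-i}{s-i}$ for some real $x\ge s$, then $k^t(\mathcal H)=0$ when $s\le x<t$, and when $x\ge t$, \[k^t(\mathcal H)\le\binom{n}{i}\frac{\binom{x-i}{t-i}}{\binom{t}{i}}=\binom{n}{i}\frac{\binom{x}{t}}{\binom{x}{i}}.\]
   Context: An $s$-graph on vertex set $V$ is a family of $s$-subsets of $V$. For $|I|=i$, $d_{\mathcal H}(I)$ is the number of edges containing $I$ and $\Delta_i(\mathcal H)=\max_{|I|=i}d_{\mathcal H}(I)$. For $t\ge s$, a $t$-clique is a $t$-set all of whose $s$-subsets are edges; $k^t(\mathcal H)$ is the number of $t$-cliques. A strict $q$-cascade is an integer sequence $n_q>n_{q-1}>\dots>n_{q-\ell+1}$ with $0\le\ell\le q$ and $n_{q-k}\ge q-k$ for all $k$; every integer $m\ge0$ can be written uniquely as $m=\sum_{k=0}^{\ell-1}\binom{n_{q-k}}{q-k}$ with a strict $q$-cascade (the $q$-cascade representation; $\ell=0$ for $m=0$). For real $x$, $\binom{x}{k}=x(x-1)\cdots(x-k+1)/k!$. *)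

(* Defs.v *)
From HB Require Import structures.
From mathcomp Require Import all_boot all_order all_algebra.
From mathcomp Require Import reals.
Set Implicit Arguments. Unset Strict Implicit. Unset Printing Implicit Defensive.
Import Order.TTheory GRing.Theory Num.Theory.

Section Hyper.
Variable V : finType.

Definition is_sgraph (s : nat) (H : {set {set V}}) : Prop :=
  forall e, e \in H -> #|e| = s.

Definition codeg (H : {set {set V}}) (I : {set V}) : nat :=
  #|[set e in H | I \subset e]|.

Definition is_clique (s t : nat) (H : {set {set V}}) (T : {set V}) : bool :=
  (#|T| == t) && [forall S : {set V}, ((S \subset T) && (#|S| == s)) ==> (S \in H)].

Definition kt (s t : nat) (H : {set {set V}}) : nat :=
  #|[set T : {set V} | is_clique s t H T]|.
End Hyper.

(* A strict q-cascade, encoded as the list ns = [n_q; n_{q-1}; ...; n_{q-l+1}],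
   i.e. ns`_k = n_{q-k}, with l = size ns. *)
Definition strict_cascade (q : nat) (ns : seq nat) : Prop :=
  [/\ size ns <= q,
      (forall k, k.+1 < size ns -> nth 0 ns k.+1 < nth 0 ns k)
    & (forall k, k < size ns -> q - k <= nth 0 ns k)]%N.

Definition cascade_rep (q m : nat) (ns : seq nat) : Prop :=
  strict_cascade q ns /\ m = (\sum_(k < size ns) 'C(nth 0 ns k, q - k))%N.

Definition binr {R : realType} (x : R) (k : nat) : R :=
  (\prod_(j < k) (x - j%:R)) / (k`!)%:R.

(* Main.v *)
Require Import Defs.
From HB Require Import structures.
From mathcomp Require Import all_boot all_order all_algebra.
From mathcomp Require Import reals.
From mathcomp Require Import zify ring lra.
Set Implicit Arguments. Unset Strict Implicit. Unset Printing Implicit Defensive.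

Section Basic.
Variable V : finType.
Implicit Types (A S T U X : {set V}) (G : {set {set V}}).

Definition sgr (q : nat) X G := forall A, A \in G -> A \subset X /\ #|A| = q.

Lemma cliqueP q r G T :
  reflect (#|T| = r /\ forall S, S \subset T -> #|S| = q -> S \in G)
          (is_clique q r G T).
Proof.
apply: (iffP andP) => [[/eqP -> /forallP H]|[-> H]]; split => //.
- by move=> S ST Sq; have := H S; rewrite ST Sq eqxx.
- by apply/forallP => S; apply/implyP => /andP[ST /eqP Sq]; apply: H.
Qed.

Lemma exists_sub T k : k <= #|T| -> exists S, S \subset T /\ #|S| = k.
Proof.
move=> kT.
have : 0 < #|[set S : {set V} | S \subset T & #|S| == k]| by rewrite cards_draws bin_gt0.
by case/card_gt0P => S; rewrite inE => /andP[ST /eqP Sk]; exists S.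
Qed.

Lemma clique_sub q r X G T : 1 <= q -> q <= r -> sgr q X G ->
  is_clique q r G T -> T \subset X.
Proof.
move=> q1 qr sG /cliqueP[Tr HT]; apply/subsetP => z zT.
have : q.-1 <= #|T :\ z|.
  have -> : #|T :\ z| = r.-1 by move: (cardsD1 z T); rewrite zT Tr add1n => ->.
  by rewrite -!subn1 leq_sub2r.
case/exists_sub => S' [S'T S'q].
have zS' : z \notin S' by apply/negP => /(subsetP S'T); rewrite !inE eqxx.
have : z |: S' \in G.
  apply: HT; first by rewrite subUset sub1set zT (subset_trans S'T) // subsetDl.
  by rewrite cardsU1 zS' S'q add1n prednK.
by case/sG => /subsetP -> //; rewrite !inE eqxx.
Qed.

Lemma clique_edges q r G T : is_clique q r G T -> 'C(r, q) <= #|G|.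
Proof.
case/cliqueP => Tr HT; rewrite -Tr -cards_draws; apply: subset_leq_card.
by apply/subsetP => S; rewrite inE => /andP[ST /eqP Sq]; apply: HT.
Qed.

Lemma kt_qq q X G : sgr q X G -> kt q q G = #|G|.
Proof.
move=> sG; rewrite /kt; apply: eq_card => T; rewrite inE.
apply/cliqueP/idP => [[Tq HT]|TG]; first by apply: HT; rewrite ?subxx.
have [_ Tq] := sG _ TG; split => // S ST Sq.
suff -> : S = T by [].
by apply/eqP; rewrite eqEcard ST Sq Tq leqnn.
Qed.

Lemma kt_1 r X G : sgr 1 X G -> kt 1 r G = 'C(#|G|, r).
Proof.
move=> sG; rewrite /kt; set W := [set v | [set v] \in G].
have -> : [set T : {set V} | is_clique 1 r G T] = [set T : {set V} | T \subset W & #|T| == r].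
  apply/setP => T; rewrite !inE; apply/cliqueP/andP => [[Tr HT]|[TW /eqP Tr]].
  - split; last by rewrite Tr.
    by apply/subsetP => v vT; rewrite inE; apply: HT; rewrite ?sub1set ?cards1.
  - split => // S ST /eqP/cards1P[v Sv]; subst S.
    by move: ST; rewrite sub1set => /(subsetP TW); rewrite inE.
rewrite cards_draws; congr 'C(_, _).
have -> : G = [set [set v] | v in W].
  apply/setP => A; apply/idP/imsetP => [AG|[v vW ->]]; last by rewrite inE in vW.
  have [_ /eqP/cards1P[v Av]] := sG _ AG; subst A.
  by exists v => //; rewrite inE.
by rewrite card_imset //; apply: set1_inj.
Qed.

End Basic.

Section Shift.
Variable V : finType.
Implicit Types (A B S T U X : {set V}) (G K : {set {set V}}).
Variables (v0 y : V).
Hypothesis v0y : v0 != y.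

Definition sh A := if (y \in A) && (v0 \notin A) then v0 |: (A :\ y) else A.
Definition unsh A := if (v0 \in A) && (y \notin A) then y |: (A :\ v0) else A.
Definition Sg G := [set A | if A \in G then sh A \in G
                            else [&& v0 \in A, y \notin A & unsh A \in G]].

Lemma sh_id A : (v0 \in A) || (y \notin A) -> sh A = A.
Proof. by rewrite /sh; case: (y \in A); case: (v0 \in A). Qed.

Lemma unsh_id A : (y \in A) || (v0 \notin A) -> unsh A = A.
Proof. by rewrite /unsh; case: (y \in A); case: (v0 \in A). Qed.

Lemma yv0 : y != v0. Proof. by rewrite eq_sym. Qed.

Lemma sh_move A : y \in A -> v0 \notin A -> sh A = v0 |: (A :\ y).
Proof. by rewrite /sh => -> ->. Qed.

Lemma unsh_move A : v0 \in A -> y \notin A -> unsh A = y |: (A :\ v0).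
Proof. by rewrite /unsh => -> ->. Qed.

Lemma card_sh A : #|sh A| = #|A|.
Proof.
rewrite /sh; case: ifP => // /andP[yA v0A].
rewrite cardsU1 !inE negb_and negbK v0A orbT (cardsD1 y A) yA.
by rewrite addnC.
Qed.

Lemma card_unsh A : #|unsh A| = #|A|.
Proof.
rewrite /unsh; case: ifP => // /andP[v0A yA].
rewrite cardsU1 !inE negb_and negbK yA orbT (cardsD1 v0 A) v0A.
by rewrite addnC.
Qed.

Lemma sh_in A : y \in A -> v0 \notin A -> (v0 \in sh A) && (y \notin sh A).
Proof.
move=> yA v0A; rewrite sh_move // !inE eqxx /= negb_or yv0 /=.
by rewrite eqxx.
Qed.

Lemma unshK A : y \in A -> v0 \notin A -> unsh (sh A) = A.
Proof.
move=> yA v0A; have /andP[a b] := sh_in yA v0A.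
rewrite unsh_move // sh_move //; apply/setP => z; rewrite !inE.
have [->|zv0] := eqVneq z v0; first by rewrite ?eqxx ?(negbTE v0y) ?(negbTE yv0) ?(negbTE yA) ?(negbTE v0A) ?v0A ?yA //= ?andbT ?orbF.
have [->|zy] := eqVneq z y; first by rewrite ?eqxx ?(negbTE v0y) ?(negbTE yv0) ?(negbTE yA) ?(negbTE v0A) ?v0A ?yA //= ?andbT ?orbF.
by rewrite ?eqxx ?(negbTE v0y) ?(negbTE yv0) ?(negbTE yA) ?(negbTE v0A) ?v0A ?yA //= ?andbT ?orbF.
Qed.

Lemma shK A : v0 \in A -> y \notin A -> sh (unsh A) = A.
Proof.
move=> v0A yA.
have [a b] : (y \in unsh A) /\ (v0 \notin unsh A).
  by rewrite unsh_move // !inE eqxx /= negb_or v0y /= eqxx.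
rewrite sh_move // unsh_move //; apply/setP => z; rewrite !inE.
have [->|zv0] := eqVneq z v0; first by rewrite ?eqxx ?(negbTE v0y) ?(negbTE yv0) ?(negbTE yA) ?(negbTE v0A) ?v0A ?yA //= ?andbT ?orbF.
have [->|zy] := eqVneq z y; first by rewrite ?eqxx ?(negbTE v0y) ?(negbTE yv0) ?(negbTE yA) ?(negbTE v0A) ?v0A ?yA //= ?andbT ?orbF.
by rewrite ?eqxx ?(negbTE v0y) ?(negbTE yv0) ?(negbTE yA) ?(negbTE v0A) ?v0A ?yA //= ?andbT ?orbF.
Qed.

Lemma Sg_mem G A : A \in G -> sh A \in G -> A \in Sg G.
Proof. by move=> AG sAG; rewrite inE AG. Qed.

Lemma card_Sg G : #|Sg G| = #|G|.
Proof.
set P := [set A | sh A \in G].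
rewrite -(cardsID G (Sg G)) -(cardsID P G).
have -> : Sg G :&: G = G :&: P.
  by apply/setP => A; rewrite !inE; case: (A \in G); rewrite ?andbT ?andbF.
congr (_ + _).
have -> : Sg G :\: G = sh @: (G :\: P).
  apply/setP => A; rewrite !inE; apply/idP/imsetP.
  - case AG: (A \in G) => //= /and3P[v0A yA uAG].
    exists (unsh A); last by rewrite shK.
    by rewrite !inE uAG shK // AG.
  - case=> B; rewrite !inE => /andP[sBG BG] ->; rewrite (negbTE sBG) /=.
    have [yB v0B] : y \in B /\ v0 \notin B.
      move: sBG; rewrite /sh; case: ifP => [/andP[]|]//; by rewrite BG.
    by have /andP[-> ->] := sh_in yB v0B; rewrite unshK.
rewrite card_in_imset // => B1 B2; rewrite !inE => /andP[s1 b1] /andP[s2 b2] E.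
have [y1 v1] : y \in B1 /\ v0 \notin B1.
  move: s1; rewrite /sh; case: ifP => [/andP[]|]//; by rewrite b1.
have [y2 v2] : y \in B2 /\ v0 \notin B2.
  move: s2; rewrite /sh; case: ifP => [/andP[]|]//; by rewrite b2.
by rewrite -(unshK y1 v1) E unshK.
Qed.

Lemma sgr_Sg q X G : v0 \in X -> sgr q X G -> sgr q X (Sg G).
Proof.
move=> v0X sG A; rewrite inE; case AG: (A \in G); first by move=> _; apply: sG.
case/and3P=> v0A yA /sG[uX uq]; split; last by rewrite -card_unsh.
rewrite -(shK v0A yA).
have [a b] : (y \in unsh A) /\ (v0 \notin unsh A).
  by rewrite unsh_move // !inE eqxx /= negb_or v0y /= eqxx.
rewrite sh_move //; apply/subsetP => z; rewrite !inE => /orP[/eqP->//|/andP[_ zu]].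
exact: (subsetP uX).
Qed.

Lemma Sg_G0 G : [set A in Sg G | v0 \notin A] \subset [set A in G | v0 \notin A].
Proof.
apply/subsetP => A; rewrite !inE => /andP[]; case: (A \in G) => //=.
by case/and3P=> ->.
Qed.

Lemma Sg_clique q r G : Sg [set T | is_clique q r G T] \subset [set T | is_clique q r (Sg G) T].
Proof.
apply/subsetP => T; rewrite !inE.
case: ifP => [/cliqueP[Tr HT] shT|_ /and3P[v0T yT /cliqueP[uTr HuT]]]; apply/cliqueP.
- split => // U UT Uq.
  have UG : U \in G by apply: HT.
  case: (boolP ((v0 \in U) || (y \notin U))) => [h|]; first by apply: Sg_mem; rewrite // sh_id.
  rewrite negb_or negbK => /andP[v0U yU].
  apply: Sg_mem => //; rewrite sh_move //.
  have yT : y \in T by apply: (subsetP UT).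
  case: (boolP (v0 \in T)) => v0T.
  + apply: HT; last by rewrite -(sh_move yU v0U) card_sh.
    apply/subsetP => z; rewrite !inE => /orP[/eqP->//|/andP[_ zU]].
    exact: (subsetP UT).
  + move: shT; rewrite sh_move // => /cliqueP[_ HsT]; apply: HsT; last first.
      by rewrite -(sh_move yU v0U) card_sh.
    apply: setUS; apply/subsetP => z; rewrite !inE => /andP[-> zU] /=.
    exact: (subsetP UT).
- have Tr : #|T| = r by rewrite -card_unsh.
  split => // U UT Uq.
  case: (boolP (v0 \in U)) => v0U.
  + have yU : y \notin U by apply: contra yT; apply: (subsetP UT).
    have uUG : unsh U \in G.
      apply: HuT; last by rewrite card_unsh.
      rewrite !unsh_move //; apply: setUS; apply/subsetP => z; rewrite !inE.
      by case/andP=> -> zU; rewrite (subsetP UT).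
    rewrite inE; case: ifP => UG; last by rewrite v0U yU uUG.
    by rewrite sh_id ?v0U.
  + have yU : y \notin U by apply: contra yT; apply: (subsetP UT).
    have UG : U \in G.
      apply: HuT => //; rewrite unsh_move //; apply/subsetP => z zU.
      rewrite !inE (subsetP UT) // andbT; apply/orP; right.
      by apply: contraNneq v0U => <-.
    by apply: Sg_mem; rewrite // sh_id // yU orbT.
Qed.

Lemma kt_Sg q r G : kt q r G <= kt q r (Sg G).
Proof.
by rewrite /kt -card_Sg; apply: subset_leq_card; apply: Sg_clique.
Qed.

End Shift.

Section Decomp.
Variable V : finType.
Implicit Types (A B S T U W X : {set V}) (G K : {set {set V}}).
Variable v0 : V.

Definition shifted G := forall A z, A \in G -> v0 \notin A -> z \in A ->
  v0 |: (A :\ z) \in G.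
Definition G0 G := [set A in G | v0 \notin A].
Definition G1 G := [set A :\ v0 | A in [set A in G | v0 \in A]].

Lemma card_G01 G : #|G0 G| + #|G1 G| = #|G|.
Proof.
rewrite -(cardsID [set A : {set V} | v0 \in A] G) addnC; congr (_ + _).
- rewrite /G1 card_in_imset.
    by apply: eq_card => A; rewrite !inE.
  move=> A B; rewrite !inE => /andP[_ a] /andP[_ b] E.
  by rewrite -(setD1K a) E setD1K.
- by apply: eq_card => A; rewrite !inE andbC.
Qed.

Lemma sgr_G0 q X G : sgr q X G -> sgr q (X :\ v0) (G0 G).
Proof.
move=> sG A; rewrite inE => /andP[/sG[AX Aq] v0A]; split => //.
by rewrite subsetD1 AX.
Qed.

Lemma sgr_G1 q X G : sgr q X G -> sgr q.-1 (X :\ v0) (G1 G).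
Proof.
move=> sG B /imsetP[A]; rewrite inE => /andP[/sG[AX Aq] v0A] ->; split.
  by apply: setSD.
by move: (cardsD1 v0 A); rewrite v0A Aq add1n => ->.
Qed.

Lemma G0_sub G : G0 G \subset G.
Proof. by apply/subsetP => A; rewrite inE => /andP[]. Qed.

Lemma G0_clique q X G : 1 <= q -> sgr q X G -> shifted G ->
  #|G0 G| <= kt q.-1 q (G1 G).
Proof.
move=> q1 sG shG; rewrite /kt; apply: subset_leq_card; apply/subsetP => A.
rewrite !inE => /andP[AG v0A]; have [AX Aq] := sG _ AG.
apply/cliqueP; split => // S SA Sq.
have : 0 < #|A :\: S|.
  rewrite cardsD (setIidPr SA) Aq Sq; case: q q1 {Aq Sq sG} => // q' _.
  by rewrite subSn ?leqnn // subnn.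
case/card_gt0P => z; rewrite inE => /andP[zS zA].
have SE : S = A :\ z.
  apply/eqP; rewrite eqEcard subsetD1 SA zS /=.
  by move: (cardsD1 z A); rewrite zA Aq Sq add1n => ->.
apply/imsetP; exists (v0 |: (A :\ z)).
  by rewrite inE shG // !inE eqxx.
by rewrite setU1K ?SE // !inE (negbTE v0A) andbF.
Qed.

Lemma kt_G0 q r X G : 1 <= q -> q < r -> sgr q X G -> shifted G ->
  kt q r G = kt q r (G0 G) + kt q r.-1 (G0 G).
Proof.
move=> q1 qr sG shG; have s0 := sgr_G0 sG.
rewrite /kt -(cardsID [set T : {set V} | v0 \in T]) addnC; congr (_ + _).
  apply: eq_card => T; rewrite !inE; apply/andP/cliqueP.
  - case=> v0T /cliqueP[Tr HT]; split => // U UT Uq; rewrite inE HT //=.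
    by apply: contra v0T; apply: (subsetP UT).
  - case=> Tr HT; split; last first.
      by apply/cliqueP; split => // U UT Uq; apply: (subsetP (G0_sub G)); apply: HT.
    have : T \subset X :\ v0.
      by apply: (@clique_sub _ q r _ (G0 G)) => //; [apply: ltnW | apply/cliqueP].
    by rewrite subsetD1 => /andP[].
set K' := [set S | is_clique q r.-1 (G0 G) S].
have K'v0 : forall S, S \in K' -> v0 \notin S.
  move=> S; rewrite inE => SK.
  have : S \subset X :\ v0.
    by apply: (clique_sub q1 _ s0 SK); rewrite -ltnS prednK // (leq_ltn_trans _ qr).
  by rewrite subsetD1 => /andP[].
have -> : [set T | is_clique q r G T] :&: [set T : {set V} | v0 \in T] = [set v0 |: S | S in K'].
  apply/setP => T; rewrite !inE; apply/andP/imsetP.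
  - case=> /cliqueP[Tr HT] v0T; exists (T :\ v0); last by rewrite setD1K.
    rewrite inE; apply/cliqueP; split.
      by move: (cardsD1 v0 T); rewrite v0T Tr add1n => ->.
    move=> U UT Uq; rewrite inE HT //; first last.
      by apply: subset_trans UT (subsetDl _ _).
    by move: UT; rewrite subsetD1 => /andP[].
  - case=> S SK ->; have v0S := K'v0 S SK; split; last by rewrite !inE eqxx.
    move: SK; rewrite inE => /cliqueP[Sr HS]; apply/cliqueP; split.
      by rewrite cardsU1 v0S Sr add1n prednK // (leq_ltn_trans _ qr).
    move=> U US Uq; case: (boolP (v0 \in U)) => v0U; last first.
      apply: (subsetP (G0_sub G)); apply: HS => //.
      apply/subsetP => z zU; move: (subsetP US z zU); rewrite !inE.
      by case/orP => // /eqP zv; move: zU; rewrite zv (negbTE v0U).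
    set W := U :\ v0.
    have WS : W \subset S.
      apply/subsetP => z; rewrite !inE => /andP[zv zU].
      by move: (subsetP US z zU); rewrite !inE (negbTE zv).
    have Wq : #|W| = q.-1 by move: (cardsD1 v0 U); rewrite v0U Uq add1n => ->.
    have : 0 < #|S :\: W|.
      rewrite cardsD (setIidPr WS) Sr Wq subn_gt0 -!subn1 ltn_sub2r //.
      by apply: leq_ltn_trans qr.
    case/card_gt0P => z; rewrite inE => /andP[zW zS].
    have zv : z != v0 by apply: contraNneq v0S => <-.
    have U'G : z |: W \in G0 G.
      apply: HS; first by rewrite subUset sub1set zS WS.
      by rewrite cardsU1 zW Wq add1n prednK.
    move: U'G; rewrite inE => /andP[U'G v0U'].
    have := shG _ z U'G v0U' (setU11 _ _).
    by rewrite setU1K // setD1K.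
rewrite card_in_imset // => S1 S2 /K'v0 a /K'v0 b E.
by rewrite -(setU1K a) E setU1K.
Qed.

Lemma shifted_exists q r X G : v0 \in X -> sgr q X G ->
  exists G', [/\ sgr q X G', #|G'| = #|G|, kt q r G <= kt q r G' & shifted G'].
Proof.
move=> v0X sG.
pose P G' := [&& [forall A in G', (A \subset X) && (#|A| == q)],
                 #|G'| == #|G| & kt q r G <= kt q r G'].
have PG : P G.
  rewrite /P eqxx leqnn !andbT; apply/forall_inP => A /sG[-> ->]; by rewrite eqxx.
have Psgr : forall G', P G' -> sgr q X G'.
  move=> G' /and3P[/forall_inP H _ _] A /H /andP[-> /eqP ->]; by [].
case: (@arg_minnP _ G P (fun G' => #|G0 G'|) PG) => G' PG' Hmin.
exists G'; case/and3P: (PG') => _ /eqP c k; split => //; first exact: Psgr.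
move=> A z AG' v0A zA.
have zv : v0 != z by apply: contraNneq v0A => ->.
have PS : P (Sg v0 z G').
  rewrite /P (card_Sg zv) c eqxx (leq_trans k (kt_Sg zv _ _ _)) !andbT.
  apply/forall_inP => B /(sgr_Sg zv v0X (Psgr _ PG'))[-> ->]; by rewrite eqxx.
have E : G0 (Sg v0 z G') = G0 G'.
  apply/eqP; rewrite eqEcard Sg_G0; exact: Hmin.
have : A \in G0 (Sg v0 z G') by rewrite E inE AG'.
rewrite inE => /andP[]; rewrite inE AG' sh_move //.
Qed.

End Decomp.

Import Order.TTheory GRing.Theory Num.Theory.
Section Binr.
Local Open Scope ring_scope.
Variable R : realType.
Implicit Types (x y u v : R).

Definition pf x k : R := \prod_(j < k) (x - j%:R).

Lemma binrE x k : binr x k = pf x k / (k`!)%:R.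
Proof. by []. Qed.

Lemma fact_neq0 k : (k`!)%:R != 0 :> R.
Proof. by rewrite pnatr_eq0 -lt0n fact_gt0. Qed.

Lemma pf_nat m k : pf m%:R k = (m ^_ k)%:R.
Proof.
elim: k => [|k IH]; first by rewrite /pf big_ord0 ffactn0.
rewrite /pf big_ord_recr /= -/(pf _ _) IH ffactnSr.
case: (leqP k m) => km; first by rewrite natrM natrB.
by rewrite ffact_small // !mul0r.
Qed.

Lemma binr_nat m k : binr m%:R k = ('C(m, k))%:R :> R.
Proof.
rewrite binrE pf_nat -bin_ffact natrM mulfK //; exact: fact_neq0.
Qed.

Lemma pfS x k : pf x k.+1 = x * pf (x - 1) k.
Proof.
rewrite /pf big_ord_recl /= subr0; congr (_ * _); apply: eq_bigr => j _.
rewrite /bump /= add1n -addn1 natrD; ring.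
Qed.

Lemma pfSr x k : pf x k.+1 = pf x k * (x - k%:R).
Proof. by rewrite /pf big_ord_recr. Qed.

Lemma binr_pascal y k : binr y k.+1 = binr (y - 1) k.+1 + binr (y - 1) k.
Proof.
rewrite !binrE pfS pfSr factS natrM.
have h1 := fact_neq0 k.
have h2 : (k.+1)%:R != 0 :> R by rewrite pnatr_eq0.
field. by rewrite h1 addrC natr1 h2.
Qed.

Lemma binr_ge0 y k : (k.-1)%:R <= y -> 0 <= binr y k.
Proof.
move=> hk; rewrite binrE divr_ge0 // prodr_ge0 // => j _.
rewrite subr_ge0 (le_trans _ hk) // ler_nat.
by case: k j {hk} => [[]|k] //= j; rewrite -ltnS.
Qed.

Lemma binr_le u v k : (k.-1)%:R <= u -> u <= v -> binr u k <= binr v k.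
Proof.
move=> hu uv; rewrite !binrE ler_wpM2r // ?invr_ge0 //.
apply: ler_prod => j _; rewrite lerD2r uv andbT subr_ge0 (le_trans _ hu) //.
by rewrite ler_nat; case: k j {hu} => [[]|k] //= j; rewrite -ltnS.
Qed.

Lemma binr_lt u v k : (0 < k)%N -> (k.-1)%:R <= u -> u < v -> binr u k < binr v k.
Proof.
move=> k0 hu uv; rewrite !binrE ltr_pM2r ?invr_gt0 ?ltr0n ?fact_gt0 //.
apply: ltr_prod.
  by case: k k0 {hu} => // k _; apply/hasP; exists ord0; rewrite ?mem_index_enum.
move=> j _; rewrite ltrD2r uv andbT subr_ge0 (le_trans _ hu) //.
by rewrite ler_nat; case: k j {hu k0} => [[]|k] //= j; rewrite -ltnS.
Qed.

Lemma binr1 y : binr y 1 = y.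
Proof. by rewrite binrE /pf big_ord1 subr0 divr1. Qed.

Lemma binr_nat_le m y r : m%:R <= y -> (r.-1)%:R <= y -> ('C(m, r))%:R <= binr y r.
Proof.
move=> my ry; case: (ltnP m r) => mr.
  by rewrite bin_small // binr_ge0.
rewrite -binr_nat; apply: binr_le => //; rewrite ler_nat.
by case: r {ry} mr => // r /ltnW.
Qed.

End Binr.

Section KK.
Variable V : finType.
Implicit Types (X : {set V}) (G : {set {set V}}).

Lemma binP_le1 a e : 0 < e -> 'C(a, e) <= 'C(a.-1, e) + 'C(a.-1, e.-1).
Proof. by case: a => [|a]; case: e => // e _; rewrite ?bin0n //= binS. Qed.

Lemma binP_le2 a e : 1 < e -> 'C(a.-1, e) + 'C(a.-1, e.-1) <= 'C(a, e).
Proof.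
case: e => [|[|e]] // _; case: a => [|a]; last by rewrite binS.
by rewrite !bin0n.
Qed.

Lemma kt_empty q r X G : 0 < q -> q <= r -> sgr q X G -> X = set0 -> kt q r G = 0.
Proof.
move=> q0 qr sG X0; apply/eqP; rewrite cards_eq0; apply/eqP/setP => T.
rewrite !inE; apply/negP => cT.
have := clique_sub q0 qr sG cT; rewrite X0 subset0 => /eqP T0.
by case/cliqueP: cT; rewrite T0 cards0 => r0 _; move: q0 qr; rewrite -r0 leqn0 => h /eqP h2; move: h; rewrite h2.
Qed.

Lemma big_predr (F : nat -> nat) q : 0 < q ->
  \sum_(k < q) F k = \sum_(k < q.-1) F k + F q.-1.
Proof. by case: q => // q _; rewrite big_ord_recr. Qed.

Theorem KK_nat n : forall X, #|X| <= n -> forall q G r (a : nat -> nat),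
  0 < q -> q <= r -> sgr q X G -> #|G| <= \sum_(k < q) 'C(a k, q - k) ->
  kt q r G <= \sum_(k < q) 'C(a k, r - k).
Proof.
elim: n => [|n IH] X Xn q G r a q0 qr sG Gb.
  by rewrite (kt_empty q0 qr sG) //; apply/eqP; rewrite -cards_eq0 -leqn0.
case: (eqVneq r q) => [rq|rq]; first by rewrite rq (kt_qq sG).
have {rq}qr' : q < r by rewrite ltn_neqAle eq_sym rq qr.
case: (eqVneq q 1) => [q1|q1].
  subst q; rewrite (kt_1 r sG); move: Gb; rewrite !big_ord1 /= subn0 => Gb.
  by rewrite subn0; apply: leq_bin2l; rewrite -[a 0]bin1.
have q2 : 1 < q by rewrite ltn_neqAle eq_sym q1 q0.
case: (set_0Vmem X) => [X0|[v0 v0X]]; first by rewrite (kt_empty q0 qr sG X0).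
have [G' [sG' cG' kG' shG']] := shifted_exists r v0X sG.
apply: (leq_trans kG'); rewrite (kt_G0 q0 qr' sG' shG').
have Xv : #|X :\ v0| <= n by move: Xn; rewrite (cardsD1 v0 X) v0X add1n.
pose a' k := (a k).-1.
have s0 := sgr_G0 (v0:=v0) sG'.
have s1 := sgr_G1 (v0:=v0) sG'.
have claim : #|G0 v0 G'| <= \sum_(k < q) 'C(a' k, q - k).
  rewrite leqNgt; apply/negP => bad.
  have e1 : #|G'| <= \sum_(k < q) 'C(a' k, q - k) + \sum_(k < q) 'C(a' k, q.-1 - k).
    rewrite cG' -big_split /=; apply: (leq_trans Gb); apply: leq_sum => k _.
    have -> : q.-1 - k = (q - k).-1 by lia.
    by apply: binP_le1; rewrite subn_gt0.
  have e2 : #|G1 v0 G'| <= \sum_(k < q.-1) 'C(a' k, q.-1 - k).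
    move: e1; rewrite -(card_G01 v0 G').
    have -> : \sum_(k < q) 'C(a' k, q.-1 - k) = \sum_(k < q.-1) 'C(a' k, q.-1 - k) + 1.
      by rewrite (big_predr (fun k => 'C(a' k, q.-1 - k))) // subnn bin0.
    set A := \sum_(k < q) _ in bad *; set B := \sum_(k < q.-1) _; lia.
  have e3 := IH _ Xv q.-1 _ q a' ltac:(lia) ltac:(lia) s1 e2.
  have e4 : \sum_(k < q.-1) 'C(a' k, q - k) <= \sum_(k < q) 'C(a' k, q - k).
    by rewrite [in X in _ <= X](big_predr (fun k => 'C(a' k, q - k))) // leq_addr.
  have e5 := G0_clique (v0:=v0) q0 sG' shG'.
  lia.
have i1 := IH _ Xv q _ r a' q0 qr s0 claim.
have i2 := IH _ Xv q _ r.-1 a' q0 ltac:(lia) s0 claim.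
apply: leq_trans (leq_add i1 i2) _; rewrite -big_split /=; apply: leq_sum => k _.
have -> : r.-1 - k = (r - k).-1 by have := ltn_ord k; lia.
by apply: binP_le2; have := ltn_ord k; lia.
Qed.

End KK.

Section KKR.
Variable V : finType.
Variable R : realType.
Implicit Types (X : {set V}) (G : {set {set V}}).
Local Open Scope ring_scope.

Lemma natr_pred n : (0 < n)%N -> (n.-1)%:R = n%:R - 1 :> R.
Proof. by case: n => // n _; rewrite -natr1 addrK. Qed.

Lemma binr_pascal' (y : R) k : (0 < k)%N -> binr y k = binr (y - 1) k + binr (y - 1) k.-1.
Proof. by case: k => // k _; rewrite binr_pascal. Qed.

Theorem KK_real n : forall X, (#|X| <= n)%N -> forall q G r (y : R),
  (0 < q)%N -> (q <= r)%N -> sgr q X G -> ((r.-1)%:R <= y)%R ->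
  ((#|G|)%:R <= binr y q)%R -> ((kt q r G)%:R <= binr y r)%R.
Proof.
elim: n => [|n IH] X Xn q G r y q0 qr sG ry Gb.
  rewrite (kt_empty q0 qr sG) ?binr_ge0 //.
  by apply/eqP; rewrite -cards_eq0 -leqn0.
case: (eqVneq r q) => [rq|rq]; first by rewrite rq (kt_qq sG).
have {rq}qr' : (q < r)%N by rewrite ltn_neqAle eq_sym rq qr.
case: (eqVneq q 1%N) => [q1|q1].
  subst q; rewrite (kt_1 r sG); apply: binr_nat_le => //.
  by rewrite -(binr1 y).
have q2 : (1 < q)%N by rewrite ltn_neqAle eq_sym q1 q0.
have r0 : (0 < r)%N by apply: leq_trans qr.
have qRr : (q%:R <= (r.-1)%:R :> R)%R by rewrite ler_nat; lia.
have q1R : (1 <= q%:R :> R)%R by rewrite ler1n.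
case: (ltP y r%:R) => [yr|yr].
  have -> : kt q r G = 0%N.
    apply/eqP; rewrite cards_eq0; apply/eqP/setP => T; rewrite !inE.
    apply/negP => cT; have := clique_edges cT; rewrite -(ler_nat R) => h.
    have : (binr y q < binr r%:R q)%R.
      apply: binr_lt => //; apply: le_trans ry; rewrite ler_nat; lia.
    by rewrite binr_nat; apply/negP; rewrite -leNgt (le_trans h Gb).
  by rewrite binr_ge0.
case: (set_0Vmem X) => [X0|[v0 v0X]]; first by rewrite (kt_empty q0 qr sG X0) binr_ge0.
have [G' [sG' cG' kG' shG']] := shifted_exists r v0X sG.
apply: (le_trans (y := (kt q r G')%:R)); first by rewrite ler_nat.
rewrite (kt_G0 q0 qr' sG' shG').
have Xv : (#|X :\ v0| <= n)%N by move: Xn; rewrite (cardsD1 v0 X) v0X add1n.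
have s0 := sgr_G0 (v0:=v0) sG'.
have s1 := sgr_G1 (v0:=v0) sG'.
have rR := natr_pred r0.
have qR := natr_pred q0.
have claim : ((#|G0 v0 G'|)%:R <= binr (y - 1) q)%R.
  case: (leP (#|G0 v0 G'|)%:R (binr (y - 1) q)) => // bad; exfalso.
  have e0 : ((#|G0 v0 G'|)%:R + (#|G1 v0 G'|)%:R <= binr (y - 1) q + binr (y - 1) q.-1 :> R)%R.
    by rewrite -natrD card_G01 cG' -binr_pascal'.
  have e1 : ((#|G1 v0 G'|)%:R <= binr (y - 1) q.-1 :> R)%R by lra.
  have e3 := IH _ Xv q.-1 _ q (y - 1) ltac:(lia) ltac:(lia) s1 ltac:(lra) e1.
  have e5 := G0_clique (v0:=v0) q0 sG' shG'; rewrite -(ler_nat R) in e5.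
  lra.
have i1 := IH _ Xv q _ r (y - 1) q0 qr s0 ltac:(lra) claim.
have rR2 : ((r.-1.-1)%:R <= y - 1 :> R)%R.
  rewrite natr_pred; first lra.
  lia.
have i2 := IH _ Xv q _ r.-1 (y - 1) q0 ltac:(lia) s0 rR2 claim.
by rewrite natrD (binr_pascal' y r0); lra.
Qed.

End KKR.

Section Link.
Variable V : finType.
Implicit Types (I T W X : {set V}) (H : {set {set V}}).

Definition link H I := [set e :\: I | e in [set e in H | I \subset e]].

Lemma link_card H I : #|link H I| <= codeg H I.
Proof. exact: leq_imset_card. Qed.

Lemma link_sgr s H I : is_sgraph s H -> sgr (s - #|I|) [set: V] (link H I).
Proof.
move=> sH B /imsetP[e]; rewrite inE => /andP[eH Ie] ->; split; first exact: subsetT.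
by rewrite cardsD (setIidPr Ie) (sH _ eH).
Qed.

Lemma link_clique s t H I T : is_clique s t H T -> I \subset T -> (#|I| <= s)%N ->
  is_clique (s - #|I|) (t - #|I|) (link H I) (T :\: I).
Proof.
move=> /cliqueP[Tt HT] IT Is; apply/cliqueP; split.
  by rewrite cardsD (setIidPr IT) Tt.
move=> W WT Ws; apply/imsetP; exists (W :|: I).
  rewrite inE subsetUr andbT; apply: HT.
    by rewrite subUset IT andbT; apply: subset_trans WT (subsetDl _ _).
  have WI : W :&: I = set0.
    apply/setP => z; rewrite !inE; apply/negP => /andP[zW zI].
    by move: (subsetP WT z zW); rewrite !inE zI.
  by rewrite cardsU WI cards0 subn0 Ws subnK.
apply/setP => z; rewrite !inE.
case zI: (z \in I) => /=; last by rewrite orbF.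
have zW : z \notin W by apply/negP => zW; move: (subsetP WT z zW); rewrite !inE zI.
by rewrite (negbTE zW).
Qed.

Lemma double_count s t i H : is_sgraph s H -> (i <= s)%N -> (s <= t)%N ->
  (kt s t H * 'C(t, i) <=
   \sum_(I in [set I : {set V} | #|I| == i]) kt (s - i) (t - i) (link H I))%N.
Proof.
move=> sH iS st.
set K := [set T | is_clique s t H T]; set D := [set I : {set V} | #|I| == i].
have e1 : (kt s t H * 'C(t, i) = \sum_(T in K) \sum_(I in D) (I \subset T : nat))%N.
  rewrite /kt -/K -sum_nat_const; apply: eq_bigr => T; rewrite inE => /cliqueP[Tt _].
  rewrite -Tt -cards_draws -sum1_card big_mkcond [RHS]big_mkcond /=; apply: eq_bigr => I _.
  by rewrite !inE andbC; case: (_ \subset _); case: (_ == _).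
rewrite e1 exchange_big /=; apply: leq_sum => I; rewrite inE => /eqP Ii.
rewrite -big_mkcondr /=.
have -> : (\sum_(T in K | I \subset T) 1 = #|[set T in K | I \subset T]|)%N.
  by rewrite -sum1_card; apply: eq_bigl => T; rewrite !inE.
rewrite -(card_in_imset (f := fun T => T :\: I)); last first.
  move=> T1 T2; rewrite !inE => /andP[_ a] /andP[_ b] E.
  apply/setP => z; case zI: (z \in I); first by rewrite (subsetP a) ?(subsetP b).
  by move/setP: E => /(_ z); rewrite !inE zI.
rewrite /kt; apply: subset_leq_card; apply/subsetP => U /imsetP[T].
rewrite !inE => /andP[cT IT] ->; rewrite -Ii; apply: link_clique => //.
by rewrite Ii.
Qed.

End Link.

Lemma sum_pad (ns : seq nat) (e : nat -> nat) q : (size ns <= q)%N ->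
  (forall k, (k < q)%N -> (0 < e k)%N) ->
  (\sum_(k < size ns) 'C(nth 0 ns k, e k) = \sum_(k < q) 'C(nth 0 ns k, e k))%N.
Proof.
move=> sq ep; rewrite (big_ord_widen _ (fun k => 'C(nth 0 ns k, e k)) sq) big_mkcond /=.
apply: eq_bigr => k _; case: ltnP => // kn.
rewrite nth_default // bin0n; have := ep k (ltn_ord k); by case: (e k).
Qed.

Section Ratio.
Variable R : realType.
Local Open Scope ring_scope.

Lemma pf_split (x : R) i k : pf x (i + k) = pf x i * pf (x - i%:R) k.
Proof.
elim: k => [|k IH]; first by rewrite addn0 /pf big_ord0 mulr1.
rewrite addnS !pfSr IH natrD; ring.
Qed.

Lemma binr_ratio (x : R) i t : (i <= t)%N -> pf x i != 0 ->
  binr (x - i%:R) (t - i)%N / ('C(t, i))%:R = binr x t / binr x i.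
Proof.
move=> it hp; move: (t - i)%N (subnKC it) => k <-.
have hC := bin_fact (ssrnat.leq_addr k i); rewrite addKn in hC.
have -> : ('C(i + k, i))%:R = ((i + k)`!)%:R / ((i`!)%:R * (k`!)%:R) :> R.
  by rewrite -hC !natrM mulfK // mulf_neq0 // fact_neq0.
rewrite !binrE pf_split.
have f1 := fact_neq0 R i; have f2 := fact_neq0 R k; have f3 := fact_neq0 R (i + k).
field; rewrite ?f1 ?f2 ?f3 ?hp //.
Qed.

End Ratio.

Unset Implicit Arguments.

Theorem mainTheorem4 (R : realType) (V : finType) (i s t : nat)
    (H : {set {set V}}) :
  (1 <= i)%N -> (i < s)%N -> (s <= t)%N -> is_sgraph s H ->
  (* (a) *)
  (forall (Delta : nat) (ns : seq nat),
     cascade_rep (s - i) Delta ns ->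
     (forall I : {set V}, #|I| = i -> (codeg H I <= Delta)%N) ->
     ((kt s t H)%:R : R) <=
       'C(#|V|, i)%:R * (1 / 'C(t, i)%:R) *
       \sum_(k < size ns) ('C(nth 0 ns k, t - i - k))%:R)%R /\
  (* (b) *)
  (forall x : R, (s%:R <= x)%R ->
     (forall I : {set V}, #|I| = i -> ((codeg H I)%:R <= binr (x - i%:R) (s - i))%R) ->
     ((x < t%:R)%R -> kt s t H = 0%N) /\
     ((t%:R <= x)%R ->
        ((kt s t H)%:R <= 'C(#|V|, i)%:R * (binr (x - i%:R) (t - i) / 'C(t, i)%:R))%R /\
        ('C(#|V|, i)%:R * (binr (x - i%:R) (t - i) / 'C(t, i)%:R) =
         'C(#|V|, i)%:R * (binr x t / binr x i) :> R)%R)).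
Proof.
move=> i1 iS st sH.
have it : (i <= t)%N by apply: leq_trans (ltnW iS) st.
have c0 : (0 < ('C(t, i))%:R :> R)%R by rewrite ltr0n bin_gt0.
have dc := double_count sH (ltnW iS) st.
set D := [set I : {set V} | #|I| == i] in dc.
have cD : #|D| = 'C(#|V|, i) by rewrite card_draws.
have lsg : forall I : {set V}, #|I| = i -> sgr (s - i) [set: V] (link H I).
  by move=> I Ii; have := link_sgr (I:=I) sH; rewrite Ii.
split.
  move=> Delta ns [[szq _ _] DE] hcod.
  have ep : forall k, (k < s - i)%N -> (0 < t - i - k)%N by move=> k; lia.
  have B : forall I : {set V}, I \in D ->
      (kt (s - i) (t - i) (link H I) <= \sum_(k < s - i) 'C(nth 0 ns k, t - i - k))%N.
    move=> I; rewrite inE => /eqP Ii.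
    apply: (KK_nat (leqnn _) (q := s - i) (G := link H I) (r := t - i)
             (a := fun k => nth 0 ns k)) => //; try lia.
      exact: lsg.
    apply: leq_trans (link_card H I) _; apply: leq_trans (hcod I Ii) _.
    by rewrite DE (@sum_pad ns (fun k => s - i - k) (s - i) szq) // => k; lia.
  have h : (kt s t H * 'C(t, i) <= 'C(#|V|, i) * \sum_(k < s - i) 'C(nth 0 ns k, t - i - k))%N.
    apply: leq_trans dc _; rewrite -cD -sum_nat_const; exact: leq_sum.
  rewrite -natr_sum (@sum_pad ns (fun k => t - i - k) (s - i) szq ep) mul1r mulrAC ler_pdivlMr //.
  by rewrite -!natrM ler_nat.
move=> x sx hcod.
have iR : (i%:R < s%:R :> R)%R by rewrite ltr_nat.
split.
  move=> xt; apply/eqP; rewrite cards_eq0; apply/eqP/setP => T; rewrite !inE.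
  apply/negP => cT.
  have [I [IT Ii]] : exists I : {set V}, I \subset T /\ #|I| = i.
    by apply: (@exists_sub V T i); case/cliqueP: cT => ->.
  have lc := link_clique cT IT; rewrite Ii in lc.
  have := clique_edges (lc (ltnW iS)) => ce.
  have h1 := hcod I Ii.
  have h2 : (('C(t - i, s - i))%:R <= binr (x - i%:R) (s - i) :> R)%R.
    apply: le_trans h1; rewrite ler_nat; apply: leq_trans ce _; exact: link_card.
  have : (binr (x - i%:R) (s - i) < binr ((t - i)%:R) (s - i) :> R)%R.
    apply: binr_lt; first by rewrite subn_gt0.
      rewrite natr_pred ?subn_gt0 // natrB ?(ltnW iS) //; lra.
    rewrite natrB //; lra.
  by rewrite binr_nat; apply/negP; rewrite -leNgt.
move=> tx; split.
  have B : forall I : {set V}, I \in D ->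
      ((kt (s - i) (t - i) (link H I))%:R <= binr (x - i%:R) (t - i) :> R)%R.
    move=> I; rewrite inE => /eqP Ii.
    apply: (KK_real (leqnn _) (q := s - i) (G := link H I) (r := t - i)) => //; try lia.
        exact: lsg.
      apply: le_trans (_ : ((t - i)%:R <= _))%R; first by rewrite ler_nat; lia.
      rewrite natrB //; lra.
    apply: le_trans (hcod I Ii); rewrite ler_nat; exact: link_card.
  have h : ((kt s t H * 'C(t, i))%:R <= 'C(#|V|, i)%:R * binr (x - i%:R) (t - i) :> R)%R.
    apply: le_trans (_ : (\sum_(I in D) (kt (s - i) (t - i) (link H I))%:R <= _))%R.
      by rewrite -natr_sum ler_nat.
    rewrite -cD mulr_natl -sumr_const; exact: ler_sum.
  by rewrite mulrA ler_pdivlMr // -natrM.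
rewrite binr_ratio //.
rewrite /pf; apply/lt0r_neq0/prodr_gt0 => j _.
rewrite subr_gt0; apply: lt_le_trans sx; apply: lt_trans iR; rewrite ltr_nat.
exact: ltn_ord.
Qed.
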